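(* Let $N\ge3$ and let $\bm A=A_1\cdots A_N$ be a random $N$-bit string with distribution $p_{\bm A}$ on $\{0,1\}^N$. For $k\in\{1,\dots,N-1\}$ let $\bm A_{\bar k}$ denote the $(N-2)$-bit substring excluding bits $k$ and $N$. Suppose that $p_{\bm A_{\bar k}}(\bm a_{\bar k})>0$ and $p_{A_kA_N|\bm A_{\bar k}}(a_ka_N|\bm a_{\bar k})>0$ for all $k,a_k,a_N,\bm a_{\bar k}$. Then $p_{\bm A}$ is uniquely determined by the family of conditional distributions $\{p_{A_kA_N|\bm A_{\bar k}}\}_{k\in\{1,\dots,N-1\}}$: any two such distributions on $\{0,1\}^N$ satisfying the positivity conditions and having the same conditionals $p_{A_kA_N|\bm A_{\bar k}}$ for all $k\in\{1,\dots,N-1\}$ are equal. *)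

(* Defs.v *)
From HB Require Import structures.
From mathcomp Require Import all_boot all_order all_algebra.
Set Implicit Arguments. Unset Strict Implicit. Unset Printing Implicit Defensive.
Import Order.TTheory GRing.Theory Num.Theory.
Local Open Scope ring_scope.

(* An N-bit string a = a_1 ... a_N is a finite function 'I_N -> bool;
   bit A_{i+1} is (a i) (0-based indexing), so the last bit A_N is index N.-1. *)
Definition bits (N : nat) := {ffun 'I_N -> bool}.

Definition is_distr (R : realFieldType) (N : nat) (p : bits N -> R) : Prop :=
  (forall x, 0 <= p x) /\ \sum_(x : bits N) p x = 1.

(* x and a agree on all bits except (0-based) bit k and the last bit N.-1,
   i.e. x_{\bar k} = a_{\bar k}. *)
Definition agree_off (N k : nat) (a x : bits N) : bool :=
  [forall i : 'I_N, ((val i != k) && (val i != N.-1)) ==> (x i == a i)].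

(* Marginal p_{A_{\bar k}}(a_{\bar k}), where a_{\bar k} is read off a. *)
Definition marg (R : realFieldType) (N k : nat) (p : bits N -> R) (a : bits N) : R :=
  \sum_(x : bits N | agree_off k a x) p x.

Definition cond (R : realFieldType) (N k : nat) (p : bits N -> R) (a : bits N) : R :=
  p a / marg k p a.

Definition positive_conds (R : realFieldType) (N : nat) (p : bits N -> R) : Prop :=
  forall (k : nat), (k < N.-1)%N -> forall a : bits N,
    0 < marg k p a /\ 0 < cond k p a.

(* Main.v *)
Require Import Defs.
From mathcomp Require Import all_boot all_order all_algebra.
From mathcomp Require Import ring zify.
From Stdlib Require Import FunctionalExtensionality.
Set Implicit Arguments. Unset Strict Implicit. Unset Printing Implicit Defensive.
Import Order.TTheory GRing.Theory Num.Theory.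
Local Open Scope ring_scope.

Lemma agree_trans (N k : nat) (a x y : bits N) :
  agree_off k a x -> agree_off k x y = agree_off k a y.
Proof.
move=> /forallP Hax; apply/forallP/forallP => H i; have := H i; have := Hax i;
  by case: (_ && _) => //= /eqP -> .
Qed.

Lemma marg_eq (R : realFieldType) (N k : nat) (p : bits N -> R) (a x : bits N) :
  agree_off k a x -> marg k p x = marg k p a.
Proof. by move=> H; rewrite /marg; apply: eq_bigl => y; exact: agree_trans. Qed.

Lemma pos_p (R : realFieldType) (N : nat) (hN : (3 <= N)%N) (p : bits N -> R) :
  positive_conds p -> forall a, 0 < p a.
Proof.
move=> H a; have [h1 h2] := H 0%N (ltac:(lia)) a.
move: h2; rewrite /cond => h2.
have -> : p a = p a / marg 0 p a * marg 0 p a by rewrite divfK // gt_eqF.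
exact: mulr_gt0.
Qed.

Lemma ratio (R : realFieldType) (N : nat) (hN : (3 <= N)%N) (p q : bits N -> R) k a x :
  positive_conds p -> positive_conds q ->
  (forall k : nat, (k < N.-1)%N -> forall a : bits N, cond k p a = cond k q a) ->
  (k < N.-1)%N -> agree_off k a x -> q a / p a = q x / p x.
Proof.
move=> Pp Pq Hc hk hax.
have [Mp _] := Pp k hk a; have [Mq _] := Pq k hk a.
have Ea := Hc k hk a; have Ex := Hc k hk x.
rewrite /cond (marg_eq p hax) (marg_eq q hax) in Ex.
rewrite /cond in Ea.
have qa : q a = p a / marg k p a * marg k q a by rewrite Ea divfK // gt_eqF.
have qx : q x = p x / marg k p a * marg k q a by rewrite Ex divfK // gt_eqF.
have pa := pos_p hN Pp a; have px := pos_p hN Pp x.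
rewrite qa qx; field.
by rewrite !gt_eqF.
Qed.

Theorem lemma11 (R : realFieldType) (N : nat) (hN : (3 <= N)%N)
  (p q : bits N -> R) :
  is_distr p -> is_distr q ->
  positive_conds p -> positive_conds q ->
  (forall k : nat, (k < N.-1)%N -> forall a : bits N, cond k p a = cond k q a) ->
  p = q.
Proof.
move=> [_ Sp] [_ Sq] Pp Pq Hc.
have rconst : forall a x : bits N, q a / p a = q x / p x.
  move=> a x.
  pose s j : bits N := [ffun i : 'I_N => if (val i < j)%N then x i else a i].
  have s0 : s 0%N = a by apply/ffunP => i; rewrite ffunE.
  have sN : s N = x by apply/ffunP => i; rewrite ffunE ltn_ord.
  have step : forall j, (j < N)%N -> q (s j) / p (s j) = q (s j.+1) / p (s j.+1).
    move=> j hj.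
    pose k := if (j < N.-1)%N then j else 0%N.
    have hk : (k < N.-1)%N by rewrite /k; case: ifP => // _; lia.
    apply: (ratio hN Pp Pq Hc hk).
    apply/forallP => i; apply/implyP => /andP [h1 h2].
    rewrite !ffunE ltnS leq_eqVlt.
    have -> : (val i == j) = false.
      apply/eqP => E; move: h1 h2 hj; rewrite /k E; case: ifP; lia.
    by [].
  have ind : forall j, (j <= N)%N -> q a / p a = q (s j) / p (s j).
    elim => [|j IH] hj; first by rewrite s0.
    by rewrite IH ?(ltnW hj) // step.
  by rewrite -sN (ind N).
pose a0 : bits N := [ffun=> false].
have eq : forall x, q x = q a0 / p a0 * p x.
  move=> x; rewrite (rconst a0 x) divfK //; by rewrite (gt_eqF (pos_p hN Pp x)).
have c1 : q a0 / p a0 = 1.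
  by move: Sq; under eq_bigr do rewrite eq; rewrite -mulr_sumr Sp mulr1.
by apply: functional_extensionality => x; rewrite eq c1 mul1r.
Qed.
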